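(* Let $X$ be a compact metrizable abelian group, $T$ a continuous automorphism of $X$, and $Y\le X$ a closed subgroup with $TY=Y$ such that $T|_Y$ is ergodic with respect to the Haar measure of $Y$. Suppose that for some $x\in X$ and $n\in\mathbb{N}$ the coset $x+Y$ satisfies $T^n(x+Y)=x+Y$. Then there exists $x'\in x+Y$ with $T^nx'=x'$. *)

(* Defs.v *)
From HB Require Import structures.
From mathcomp Require Import all_boot all_order all_algebra.
From mathcomp Require Import all_classical all_reals all_analysis.
Set Implicit Arguments. Unset Strict Implicit. Unset Printing Implicit Defensive.
Import Order.TTheory GRing.Theory Num.Theory.
Local Open Scope classical_set_scope.
Local Open Scope ring_scope.

Definition metrizable (R : realType) (X : topologicalType) : Prop :=
  exists d : X -> X -> R,
    [/\ forall x y, 0 <= d x y,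
        forall x y, d x y = 0 <-> x = y,
        forall x y, d x y = d y x,
        forall x y z, d x z <= d x y + d y z
      & forall A : set X, open A <->
          (forall x, A x -> exists2 e : R, 0 < e & [set y | d x y < e] `<=` A)].

(* topologicalZmodType is not a pointedType; we point X at 0 via a copy zpt X
   (convertible to X) in order to form its Borel sigma-algebra. *)
Definition zpt (X : topologicalZmodType) : Type := X.
HB.instance Definition _ (X : topologicalZmodType) := Choice.on (zpt X).
HB.instance Definition _ (X : topologicalZmodType) :=
  isPointed.Build (zpt X) (0%R : X).
Notation borel X := (g_sigma_algebraType (@open X : set (set (zpt X)))).

Definition closed_subgroup (X : topologicalZmodType) (Y : set X) : Prop :=
  [/\ closed Y, Y 0 & forall a b, Y a -> Y b -> Y (a - b)].

Definition cont_automorphism (X : topologicalZmodType) (T : X -> X) : Prop :=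
  [/\ {morph T : a b / a + b}, bijective T & continuous T].

(* mu, a Borel measure on X, is the (normalized) Haar measure of the closed
   subgroup Y, viewed as a measure on X concentrated on Y: a probability
   measure on Y invariant under translations by elements of Y. *)
Definition haar_of (R : realType) (X : topologicalZmodType) (Y : set X)
  (mu : {measure set (borel X) -> \bar R}) : Prop :=
  [/\ mu Y = 1%E, mu (~` Y) = 0%E
    & forall (y : X) (A : set (borel X)), Y y -> measurable A ->
        mu [set a + y | a in A] = mu A].

Definition ergodic_on (R : realType) (X : topologicalZmodType) (Y : set X)
  (T : X -> X) (mu : {measure set (borel X) -> \bar R}) : Prop :=
  (forall A : set (borel X), measurable A -> A `<=` Y ->
      mu (T @^-1` A `&` Y) = mu A) /\
  (forall A : set (borel X), measurable A -> A `<=` Y ->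
      T @^-1` A `&` Y = A -> mu A = 0%E \/ mu A = 1%E).

(* Main.v *)
Require Import Defs.
From HB Require Import structures.
From mathcomp Require Import all_boot all_order all_algebra.
From mathcomp Require Import all_classical all_reals all_analysis.
From mathcomp Require Import lra.
From mathcomp Require finmap.
Import Order.TTheory GRing.Theory Num.Theory.
Set Implicit Arguments. Unset Strict Implicit.
Local Open Scope classical_set_scope.
Local Open Scope ring_scope.

Lemma open_meas (X : topologicalZmodType) (A : set X) :
  open A -> measurable (A : set (borel X)).
Proof. move=> oA. exact: sub_sigma_algebra. Qed.

Lemma closed_meas (X : topologicalZmodType) (A : set X) :
  closed A -> measurable (A : set (borel X)).
Proof. move=> cA. rewrite -[A]setCK. apply: measurableC. apply: open_meas.
 exact: closed_openC. Qed.

Arguments open_meas {X A}.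
Arguments closed_meas {X A}.
Lemma cont_subr (X : topologicalZmodType) (z : X) : continuous (fun a : X => a - z).
Proof.
move=> a; apply: (@continuous_comp _ _ _ (fun a => (a, z)) (fun x : X * X => x.1 - x.2)).
  by apply: cvg_pair => /=; [exact: cvg_id|exact: cvg_cst].
exact: sub_continuous.
Qed.

Lemma zid (V : zmodType) (p q a b : V) : (p - q) - (a - b) = (p - a) - (q - b).
Proof. by rewrite !opprB addrACA [RHS]addrACA [- q + _]addrC. Qed.

Definition pX (X : topologicalZmodType) : Type := X.
HB.instance Definition _ (X : topologicalZmodType) := Choice.on (pX X).
HB.instance Definition _ (X : topologicalZmodType) := isPointed.Build (pX X) (0%R : X).
HB.instance Definition _ (X : topologicalZmodType) := Topological.copy (pX X) X.

Lemma compact_coverX (X : topologicalZmodType) (Y : set X) : compact Y -> @cover_compact X Y.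
Proof.
move=> cY; have : @compact (pX X) Y by exact: cY.
by rewrite compact_cover.
Qed.

Lemma metr_hausdorff (R : realType) (X : topologicalZmodType) :
  metrizable R X -> hausdorff_space X.
Proof.
case=> d [d0 dE dC dT dO].
rewrite open_hausdorff => x y xy.
have dxy : 0 < d x y.
  rewrite lt_neqAle d0 andbT; apply/negP => /eqP/esym/dE => exy.
  by move/eqP: xy.
pose r := d x y / 2.
have oB : forall z, open [set w | d z w < r].
  move=> z; apply/dO => w /= zw; exists (r - d z w); first by rewrite subr_gt0.
  move=> u /= wu; have := dT z w u; lra.
exists ([set w | d x w < r], [set w | d y w < r]).
  by rewrite /= !inE /=; split; rewrite /r ?(dE x x).2 ?(dE y y).2 // divr_gt0.
split; [exact: oB| exact: oB|].
apply/eqP; rewrite -subset0 => w [/= xw yw].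
have := dT x w y; rewrite (dC w y); rewrite /r in xw yw; lra.
Qed.

Lemma cont_phi (X : topologicalZmodType) (S : X -> X) : continuous S ->
  continuous (fun a : X => S a - a).
Proof.
move=> cS a; apply: (@continuous_comp _ _ _ (fun a => (S a, a)) (fun x : X * X => x.1 - x.2)).
  by apply: cvg_pair => /=; [exact: cS|exact: cvg_id].
exact: sub_continuous.
Qed.

Lemma cont_iter (X : topologicalZmodType) (T : X -> X) i : continuous T ->
  continuous (iter i T).
Proof.
move=> cT; elim: i => [|i IH] /=; first by move=> a; exact: cvg_id.
move=> a; apply: continuous_comp; [exact: IH| exact: cT].
Qed.

Lemma haar_pos (R : realType) (X : topologicalZmodType) (Y : set X)
  (mu : {measure set (borel X) -> \bar R}) :
  compact Y -> closed Y -> (forall a b, Y a -> Y b -> Y (a - b)) -> haar_of Y mu ->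
  forall O : set X, open O -> forall o, O o -> Y o ->
  (0 < mu (O `&` Y : set (borel X)))%E.
Proof.
move=> cY clY YB [mY1 mYC mtr] O oO o Oo Yo.
have mO := open_meas oO; have mY := closed_meas clY.
have mOY : mu (O : set (borel X)) = mu (O `&` Y : set (borel X)).
  have h0 : mu (O `\` Y : set (borel X)) = 0%E.
    apply/eqP; rewrite eq_le; apply/andP; split; last exact: measure_ge0.
    rewrite -mYC le_measure ?inE //.
      exact: measurableD.
    exact: measurableC.
  transitivity (mu (O `\` Y : set (borel X)) + mu (O `&` Y : set (borel X)))%E.
    exact: measureDI.
  by rewrite h0 add0e.
rewrite lt0e measure_ge0 andbT -mOY; apply/eqP => mO0.
pose f (y : X) : set X := [set a + (y - o) | a in O].
have fE y : f y = (fun b => b - (y - o)) @^-1` O.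
  apply/seteqP; split => b /=.
    by case=> a Oa <-; rewrite addrK.
  by move=> Ob; exists (b - (y - o)) => //; rewrite subrK.
have ofy y : open (f y) by rewrite fE; apply: open_comp => // u _; exact: cont_subr.
have cY2 := compact_coverX cY.
move: cY2 => /(_ X Y f (fun y _ => ofy y)).
case.
  move=> y Yy; exists y => //; exists o => //; by rewrite addrC subrK.
move=> D' D'Y YD'.
have mf y : measurable (f y : set (borel X)) by apply: open_meas.
have H := content_sub_fsum mu (finite_fset D') (fun i _ => mf i) mY YD'.
rewrite fsbig1 in H; last first.
  move=> y /D'Y /set_mem Yy.
  transitivity (mu (O : set (borel X))); last exact: mO0.
  by apply: mtr; [exact: (YB _ _ Yy Yo)| exact: mO].
have H' : (mu (Y : set (borel X)) <= 0)%E by exact: H.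
by move: H'; rewrite mY1 lee_fin ler10.
Qed.

Unset Implicit Arguments. Set Strict Implicit.

Theorem lemma4p8 (R : realType) (X : topologicalZmodType)
  (hcomp : compact [set: X]) (hmetr : metrizable R X)
  (T : X -> X) (hT : cont_automorphism T)
  (Y : set X) (hY : closed_subgroup Y) (hTY : T @` Y = Y)
  (herg : exists mu : {measure set (borel X) -> \bar R},
            haar_of Y mu /\ ergodic_on Y T mu)
  (x : X) (n : nat)
  (hn : iter n T @` [set x + y | y in Y] = [set x + y | y in Y]) :
  exists2 x' : X, [set x + y | y in Y] x' & iter n T x' = x'.
Proof.
case: hT => Tadd Tbij Tcont.
case: (hY) => Ycl Y0 YB.
have [mu [hmu [_ herg0]]] := herg.
have Tinj : injective T by apply: bij_inj.
have YN a : Y a -> Y (- a) by move=> Ya; rewrite -sub0r; apply: YB.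
have YD a b : Y a -> Y b -> Y (a + b).
  by move=> Ya Yb; rewrite -[b]opprK; apply: YB => //; apply: YN.
have iadd i : {morph iter i T : a b / a + b}.
  by elim: i => [//|i IH] a b /=; rewrite IH Tadd.
have i0 i : iter i T 0 = 0.
  by apply: (@addrI _ (iter i T 0)); rewrite addr0 -iadd addr0.
have iN i a : iter i T (- a) = - iter i T a.
  by apply/eqP; rewrite -addr_eq0 -iadd addNr i0.
have iB i a b : iter i T (a - b) = iter i T a - iter i T b by rewrite iadd iN.
have TY a : Y a -> Y (T a) by move=> Ya; rewrite -hTY; exists a.
have iY i a : Y a -> Y (iter i T a) by elim: i => [//|i IH] /= Ya; apply/TY/IH.
have Ysurj i a : Y a -> exists2 b, Y b & iter i T b = a.
  elim: i a => [|i IH] a Ya; first by exists a.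
  have [b Yb <-] := IH a Ya.
  have : (T @` Y) b by rewrite hTY.
  by case=> b' Yb' <-; exists b' => //; rewrite iterSr.
have iinj i : injective (iter i T).
  by elim: i => [//|i IH] a b /= /Tinj /IH.
have icomm i j a : iter i T (iter j T a) = iter j T (iter i T a).
  by rewrite -!iterD addnC.
case: (posnP n) => [n0|npos].
  by exists x; [exists 0; rewrite ?addr0|rewrite n0].
pose S := iter n T.
have [y0 Yy0 Ey0] : exists2 y0, Y y0 & x + y0 = S x.
  have : (S @` [set x + y | y in Y]) (S x).
    by exists x => //; exists 0 => //; rewrite addr0.
  by rewrite hn => -[y0 Yy0 E]; exists y0.
pose phi a := S a - a.
pose Z := phi @` Y.
case: (pselect (Z (- y0))) => [[y Yy Ey] | nZ].
  exists (x + y); first by exists y.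
  have Sy : S y = - y0 + y by rewrite -Ey subrK.
  by rewrite iadd -/S -Ey0 Sy addrA addrK.
exfalso.
have cY : compact Y := subclosed_compact Ycl hcomp (@subsetT _ Y).
have Scont : continuous S := @cont_iter _ _ n Tcont.
have cZ : closed Z.
  apply: compact_closed; first exact: metr_hausdorff hmetr.
  apply: continuous_compact => //; apply: continuous_subspaceT.
  exact: cont_phi.
have phiB a b : phi (a - b) = phi a - phi b.
  by rewrite /phi /S iB zid.
have Z0 : Z 0 by exists 0 => //; rewrite /phi /S i0 subr0.
have ZB a b : Z a -> Z b -> Z (a - b).
  by move=> [a' Ya' <-] [b' Yb' <-]; exists (a' - b'); [apply: YB|rewrite phiB].
have ZD a b : Z a -> Z b -> Z (a + b).
  move=> Za Zb; rewrite -[b]opprK; apply: (ZB) => //.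
  by rewrite -sub0r; apply: (ZB).
have phiZ a : Y a -> Z (phi a) by move=> Ya; exists a.
have pZ i : ~ Z (iter i T (- y0)).
  case=> y Yy Ey; have [b Yb Eb] := Ysurj i y Yy.
  apply: nZ; exists b => //; apply: (iinj i).
  by rewrite -Ey -Eb /phi /S iB icomm.
have nb i : \forall ab \near (- y0, 0 : X), ~ Z (iter i T ab.1 - ab.2).
  have gc : continuous (fun ab : X * X => iter i T ab.1 - ab.2).
    move=> ab; apply: (@continuous_comp _ _ _ (fun ab : X * X => (iter i T ab.1, ab.2))
      (fun x : X * X => x.1 - x.2)); last exact: sub_continuous.
    apply: cvg_pair => /=; last exact: cvg_snd.
    by apply: continuous_comp; [exact: cvg_fst | exact: cont_iter].
  have hN : nbhs ((iter i T (- y0, 0 : X).1 - (- y0, 0 : X).2)) (~` Z).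
    apply: open_nbhs_nbhs; split; first exact: closed_openC.
    by rewrite /= subr0; exact: pZ.
  exact: (gc (- y0, 0) _ hN).
have nball m : \forall ab \near (- y0, 0 : X), forall i, (i < m)%N -> ~ Z (iter i T ab.1 - ab.2).
  elim: m => [|m IH]; first by apply: (@nearW _ _ _ (nbhs_filter (- y0, 0 : X))) => ab i.
  apply: filterS2 IH (nb m) => ab H1 H2 i.
  by rewrite ltnS leq_eqVlt => /orP[/eqP -> //| /H1].
have [[A B] /= [nA nB] AB] := nball n.
move: nA; rewrite nbhsE => -[A' [oA' A'c] A'A].
move: nB; rewrite nbhsE => -[V [oV V0] VB].
pose W : set X := fun a => exists v z, [/\ V v, Z z & a = v + z].
have oW : open W.
  have -> : W = \bigcup_(z in Z) ((fun a => a - z) @^-1` V).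
    apply/seteqP; split => a.
      by case=> v [z [Vv Zz ->]]; exists z => //=; rewrite addrK.
    by case=> z Zz /= Vaz; exists (a - z), z; split => //; rewrite subrK.
  apply: bigcup_open => z _; apply: open_comp => // u _; exact: cont_subr.
have Winv w : Y w -> (W (S w) <-> W w).
  move=> Yw; split.
    case=> v [z [Vv Zz E]]; exists v, (z - phi w); split => //; first exact: (ZB _ _ Zz (phiZ _ Yw)).
    by rewrite /phi opprB addrA -E addrC subrK.
  case=> v [z [Vv Zz E]]; exists v, (z + phi w); split => //; first exact: (ZD _ _ Zz (phiZ _ Yw)).
  by rewrite /phi addrA -E addrC subrK.
pose O : set X := fun a => exists2 i, (i < n)%N & W (iter i T a).
have oO : open O.
  have -> : O = \bigcup_(i in [set i | (i < n)%N]) (iter i T @^-1` W).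
    by apply/seteqP; split => a [i ilt Wi]; exists i.
  apply: bigcup_open => i _; apply: open_comp => // u _; exact: cont_iter.
pose U : set X := O `&` Y.
have Uinv : T @^-1` U `&` Y = U.
  apply/seteqP; split => a.
    case=> -[[i ilt Wi] YTa] Ya; split => //.
    move: Wi; rewrite -iterSr => Wi.
    have [ltn|] := ltnP i.+1 n; first by exists i.+1.
    move=> ge; have ei : i.+1 = n by apply/eqP; rewrite eqn_leq ge ilt.
    by exists 0%N => //; apply/(Winv a Ya); rewrite /S -ei.
  case=> -[i ilt Wi] Ya; split => //; split; last exact: TY.
  case: i ilt Wi => [|j] jlt Wj.
    exists n.-1; first by rewrite prednK.
    by rewrite -iterSr prednK //; apply/(Winv a Ya).
  exists j; first exact: ltnW.
  by rewrite -iterSr.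
have mU : measurable (U : set (borel X)).
  exact: measurableI (open_meas oO) (closed_meas Ycl).
have mA'Y : measurable (A' `&` Y : set (borel X)).
  exact: measurableI (open_meas oA') (closed_meas Ycl).
have O0 : O 0.
  by exists 0%N => //; exists 0, 0; split => //; rewrite addr0.
have Upos : (0 < mu (U : set (borel X)))%E.
  exact: (haar_pos cY Ycl YB hmu oO O0 Y0).
have Vpos : (0 < mu (A' `&` Y : set (borel X)))%E.
  exact: (haar_pos cY Ycl YB hmu oA' A'c (YN _ Yy0)).
have disj : (U : set (borel X)) `&` (A' `&` Y) = set0.
  apply/seteqP; split; last by move=> a.
  move=> a [[[i ilt [v [z [Vv Zz E]]]] Ya] [A'a _]].
  have H := AB (a, v) (conj (A'A _ A'a) (VB _ Vv)).
  by apply: (H i ilt); rewrite /= E addrC addKr.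
have Hsum : (mu ((U : set (borel X)) `|` (A' `&` Y)) = mu (U : set (borel X)) + mu (A' `&` Y : set (borel X)))%E.
  exact: measureU.
have Hle : (mu ((U : set (borel X)) `|` (A' `&` Y)) <= mu (Y : set (borel X)))%E.
  apply: le_measure; rewrite ?inE //.
  - exact: measurableU.
  - exact: closed_meas.
  - by move=> a [[_ Ya]|[_ Ya]].
case: (hmu) => mY1 _ _.
case: (herg0 U mU (@subIsetr _ _ _) Uinv) => mU01.
  by move: Upos; rewrite mU01 ltxx.
move: Hle; rewrite Hsum mU01 mY1 -[X in (_ <= X)%E]adde0 leeD2lE //.
by rewrite leNgt Vpos.
Qed.
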